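(* Let $n\ge 1$ be an integer and let $\mathcal{F}\subseteq\mathbb{Z}_{2^n}$. If $\mathcal{F}$ does not contain a projective $2$-cube, then $|\mathcal{F}|\le |L_1|=2^{n-1}$.
   Context: All arithmetic is in the cyclic group $\mathbb{Z}_{2^n}$. For a multiset $S=\{a_1,\dots,a_d\}$ of $d$ (not necessarily distinct) elements of $\mathbb{Z}_{2^n}$, the projective $d$-cube generated by $S$ is the set $\Sigma^*S=\{\sum_{i\in I}a_i \bmod 2^n:\emptyset\ne I\subseteq[d]\}$. A set $A$ contains a projective $d$-cube if $\Sigma^*S\subseteq A$ for some multiset $S$ of size $d$. Thus a projective $2$-cube is a set $\{a,b,a+b\}$ (with $a=b$ allowed, giving $\{a,2a\}$). Layers: for $1\le i\le n$, $L_i=\{x\in\mathbb{Z}_{2^n}: x\equiv 2^{i-1}\pmod{2^i}\}$, and $L_{n+1}=\{0\}$; so $L_1$ is the set of odd residues. *)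

(* Defs.v *)
From mathcomp Require Import all_boot.
Set Implicit Arguments. Unset Strict Implicit. Unset Printing Implicit Defensive.

(* Elements of Z_{2^n} are represented by residues in 'I_(2^n) (values 0..2^n-1),
   arithmetic is done in nat and reduced modulo 2^n. *)

(* Sigma^* S for a multiset S = (a_1,...,a_d) given as a d-tuple of residues:
   all sums over nonempty index sets I, reduced mod 2^n. *)
Definition proj_cube_sums (n d : nat) (S : d.-tuple nat) : {set 'I_(2 ^ n)} :=
  [set x : 'I_(2 ^ n) | [exists I : {set 'I_d},
     (I != set0) && (x == (\sum_(i in I) tnth S i) %% 2 ^ n :> nat)]].

Definition contains_proj_cube (n d : nat) (A : {set 'I_(2 ^ n)}) : Prop :=
  exists S : d.-tuple 'I_(2 ^ n),
    proj_cube_sums n [tuple of map val S] \subset A.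

Definition layer (n i : nat) : {set 'I_(2 ^ n)} :=
  [set x : 'I_(2 ^ n) | x %% 2 ^ i == 2 ^ i.-1].

(* Main.v *)
Require Import Defs.
From mathcomp Require Import all_boot.

Section Aux.
Variable n : nat.
Lemma pos2n : 0 < 2 ^ n. Proof. by rewrite expn_gt0. Qed.
Definition sh (a : nat) (x : 'I_(2 ^ n)) : 'I_(2 ^ n) :=
  Ordinal (ltn_pmod (x + a) pos2n).
Lemma sh_inj a : injective (sh a).
Proof.
move=> x y /(congr1 val) /= /eqP.
rewrite -/(_ == _ %[mod _]) eqn_modDr !modn_small // => /eqP; exact: val_inj.
Qed.
End Aux.

Lemma two_sum (f : 'I_2 -> nat) (I : {set 'I_2}) :
  \sum_(i in I) f i = (if ord0 \in I then f ord0 else 0) + (if ord_max \in I then f ord_max else 0).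
Proof.
rewrite big_mkcond big_ord_recl big_ord1.
by have -> : lift ord0 ord0 = ord_max :> 'I_2 by apply: val_inj.
Qed.

Theorem proposition1p5 (n : nat) (F : {set 'I_(2 ^ n)}) :
  1 <= n ->
  ~ contains_proj_cube 2 F ->
  #|F| <= #|layer n 1| /\ #|layer n 1| = 2 ^ n.-1.
Proof.
case: n F => [//|n] F _ HF.
have podd : forall y, odd (y %% 2 ^ n.+1) = odd y.
  move=> y; have h2 : 2 %| 2 ^ n.+1 by rewrite expnS dvdn_mulr.
  by have := modn_dvdm y h2; rewrite !modn2; case: odd; case: odd.
have HL : #|layer n.+1 1| = 2 ^ n.
  set O := layer n.+1 1.
  have inO : forall x : 'I_(2 ^ n.+1), (x \in O) = odd x.
    by move=> x; rewrite inE expn1 expn0 modn2 eqb1.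
  have h1 : #|O| <= #|~: O|.
    rewrite -(card_imset _ (@sh_inj n.+1 1)); apply: subset_leq_card.
    apply/subsetP => y /imsetP [x xO ->]; rewrite inE inO /= podd oddD.
    by rewrite -inO xO.
  have h2 : #|~: O| <= #|O|.
    rewrite -(card_imset _ (@sh_inj n.+1 1)); apply: subset_leq_card.
    apply/subsetP => y /imsetP [x xO ->]; rewrite inO /= podd oddD.
    by move: xO; rewrite inE inO; case: odd.
  have := cardsC O; rewrite card_ord [in X in _ = X]expnS.
  have -> : #|~: O| = #|O| by apply/eqP; rewrite eqn_leq h1 h2.
  by rewrite addnn -mul2n => /eqP; rewrite eqn_mul2l /= => /eqP.
split; last by rewrite HL.
rewrite HL.
case: (set_0Vmem F) => [->|[a aF]]; first by rewrite cards0.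
have disj : [disjoint F & @sh n.+1 a @: F].
  rewrite -setI_eq0; apply/eqP/setP => y; rewrite !inE.
  apply/negP => /andP [yF /imsetP [x xF yE]].
  apply: HF; exists [tuple x; a].
  apply/subsetP => z; rewrite inE => /existsP [I /andP [I0 /eqP zE]].
  move: zE; rewrite two_sum !(tnth_nth 0) /=.
  case e0: (ord0 \in I); case e1: (ord_max \in I) => /= zE.
  - by rewrite (_ : z = y) //; apply: val_inj; rewrite yE /= zE.
  - by rewrite (_ : z = x) //; apply: val_inj => /=; rewrite zE addn0 modn_small.
  - by rewrite (_ : z = a) //; apply: val_inj => /=; rewrite zE add0n modn_small.
  - exfalso; move/negP: I0; apply; apply/eqP/setP => i; rewrite inE.
    case: i => [[|[|//]] Hi].
    + by rewrite (_ : Ordinal Hi = ord0) ?e0 //; exact: val_inj.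
    + by rewrite (_ : Ordinal Hi = ord_max) ?e1 //; exact: val_inj.
have hU := leq_card_setU F (@sh n.+1 a @: F).
rewrite disj card_imset in hU; last exact: sh_inj.
have hM := max_card (F :|: @sh n.+1 a @: F).
rewrite card_ord in hM.
have := leq_trans (eq_leq (esym (eqP hU.2))) hM.
by rewrite addnn -mul2n [in X in _ <= X]expnS leq_pmul2l.
Qed.
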